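(* Let $M$ be a model with borders and $U\subseteq M$ an up-set. The following are equivalent: (1) there is a $(\wedge,\to)$-formula $\varphi$ with $v(\varphi)=U$; (2) for all $x\in M$: if for every $z\in M^s$ with $z\ge x$ there exists $y\in U\cap M^s$ bisimilar to $z$ in $M^s$, then $x\in U$; (3) for all $x\in M$: (a) if all separated points $z\ge x$ are in $U$, then $x\in U$; and (b) if $x\in M^s$ and there exists $x'\in U\cap M^s$ bisimilar to $x$ in $M^s$, then $x\in U$.
   Context: Fix $n\ge1$ and variables $p_1,\dots,p_n$. A model is $(M,\le,c)$, $(M,\le)$ a poset, $c:M\to\{0,1\}^n$ order-preserving (componentwise order), with intuitionistic Kripke semantics ($x\models p_i$ iff $c(x)_i=1$; $x\models\varphi\to\psi$ iff every $y\ge x$ satisfying $\varphi$ satisfies $\psi$). $v(\varphi)$ is the set of points of $M$ satisfying $\varphi$. A $(\wedge,\to)$-formula uses only $\wedge,\to$. A point $x$ is a $q$-border point if $x\not\models q$ and all $y>x$ satisfy $q$; separated if it is a $q$-border point for some variable $q$. $M^s$ is the set of separated points with restricted order and colouring, a model in its own right, all of whose chains have at most $n$ elements. $M$ has borders if for every variable $p$ and $x$ with $x\not\models p$ there is a $p$-border point $y\ge x$. Two points of $M^s$ are bisimilar in $M^s$ if they are related by an intuitionistic bisimulation of the model $M^s$ (colour-preserving, with forth and back conditions for $\le$); equivalently, since $M^s$ has finite depth, they have the same image under the unique p-morphism from $M^s$ to the $n$-universal model $U(n)$. *)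

(* Defs.v *)
From mathcomp Require Import all_boot.
Set Implicit Arguments. Unset Strict Implicit. Unset Printing Implicit Defensive.

(* An intuitionistic Kripke model over variables p_0..p_{n-1}:
   a poset (M, le) with an order-preserving colouring c : M -> {0,1}^n. *)
Record model (n : nat) := Model {
  carrier :> Type;
  le : carrier -> carrier -> Prop;
  le_refl : forall x, le x x;
  le_antisym : forall x y, le x y -> le y x -> x = y;
  le_trans : forall x y z, le x y -> le y z -> le x z;
  col : carrier -> 'I_n -> bool;
  col_mono : forall x y (i : 'I_n), le x y -> col x i -> col y i
}.

Definition lt n (M : model n) (x y : M) : Prop := le x y /\ x <> y.

Inductive aiform (n : nat) : Type :=
| AVar of 'I_n
| AAnd of aiform n & aiform n
| AImp of aiform n & aiform n.

Fixpoint sat n (M : model n) (x : M) (phi : aiform n) : Prop :=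
  match phi with
  | AVar i => col x i = true
  | AAnd a b => sat x a /\ sat x b
  | AImp a b => forall y : M, le x y -> sat y a -> sat y b
  end.

Definition upset n (M : model n) (U : M -> Prop) : Prop :=
  forall x y : M, le x y -> U x -> U y.

Definition border n (M : model n) (q : 'I_n) (x : M) : Prop :=
  col x q = false /\ forall y : M, lt x y -> col y q = true.

Definition separated n (M : model n) (x : M) : Prop :=
  exists q, border q x.

Definition has_borders n (M : model n) : Prop :=
  forall (p : 'I_n) (x : M), col x p = false ->
    exists y : M, le x y /\ border p y.

(* intuitionistic bisimulation of the model M^s (separated points,
   restricted order and colouring) *)
Definition sbisimulation n (M : model n) (R : M -> M -> Prop) : Prop :=
  forall x x' : M, R x x' ->
    [/\ separated x, separated x',
        (forall i, col x i = col x' i),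
        (forall y : M, separated y -> le x y ->
           exists2 y' : M, separated y' /\ le x' y' & R y y') &
        (forall y' : M, separated y' -> le x' y' ->
           exists2 y : M, separated y /\ le x y & R y y')].

Definition sbisimilar n (M : model n) (x x' : M) : Prop :=
  exists R, sbisimulation R /\ R x x'.

(* Main.v *)
Require Import Defs.
From mathcomp Require Import all_boot.
From Stdlib Require Import Classical ClassicalEpsilon.
From Stdlib Require List.
Set Implicit Arguments. Unset Strict Implicit. Unset Printing Implicit Defensive.

Lemma sat_mono n (M : model n) (phi : aiform n) :
  forall x y : M, le x y -> sat x phi -> sat y phi.
Proof.
elim: phi => [i|a IHa b IHb|a IHa b IHb] x y hxy /=.
- exact: col_mono.
- by case=> ha hb; split; [apply: IHa hxy ha | apply: IHb hxy hb].
- move=> h z hyz. apply: h. exact: le_trans hxy hyz.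
Qed.

Lemma sat_down n (M : model n) (hb : has_borders M) (phi : aiform n) :
  forall x : M, ~ sat x phi -> exists w, le x w /\ separated w /\ ~ sat w phi.
Proof.
elim: phi => [i|a IHa b IHb|a IHa b IHb] x /= hn.
- have hf : col x i = false by move: hn; case: (col x i).
  case: (hb i x hf) => y [hxy hby]. exists y; split=>//; split; first by exists i.
  by case: hby => -> _.
- case: (classic (sat x a)) => ha.
  + have hnb : ~ sat x b by move=> hb'; apply: hn.
    case: (IHb x hnb) => w [h1 [h2 h3]]. exists w; do 2 split=>//. by case.
  + case: (IHa x ha) => w [h1 [h2 h3]]. exists w; do 2 split=>//. by case.
- have [y [hxy [hya hyb]]] : exists y, le x y /\ sat y a /\ ~ sat y b.
  { apply: NNPP => hne; apply: hn => y hxy hya. apply: NNPP => hyb. apply: hne. by exists y. }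
  case: (IHb y hyb) => w [h1 [h2 h3]]. exists w; split; first exact: le_trans hxy h1.
  split=>//. move=> h; apply: h3; apply: h; [exact: le_refl | exact: sat_mono h1 hya].
Qed.

Lemma sat_up n (M : model n) (hb : has_borders M) (phi : aiform n) (x : M) :
  (forall w, separated w -> le x w -> sat w phi) -> sat x phi.
Proof.
move=> h; apply: NNPP => hn; case: (sat_down hb hn) => w [h1 [h2 h3]].
exact: h3 (h w h2 h1).
Qed.

Lemma sbisimilar_bisim n (M : model n) : sbisimulation (@sbisimilar n M).
Proof.
move=> x x' [R [hR hxx']]. case: (hR x x' hxx') => s1 s2 hc hf hb'. split=>//.
- move=> y sy hxy. case: (hf y sy hxy) => y' h hr. exists y'=>//. by exists R.
- move=> y' sy hxy. case: (hb' y' sy hxy) => y h hr. exists y=>//. by exists R.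
Qed.

Lemma sbisimilar_sym n (M : model n) (x y : M) : sbisimilar x y -> sbisimilar y x.
Proof.
case=> R [hR hxy]. exists (fun a b => R b a); split=>//.
move=> a b hab. case: (hR b a hab) => s1 s2 hc hf hb'.
split=>//; by move=> *; rewrite hc.
Qed.

Lemma sbisimilar_refl n (M : model n) (x : M) : separated x -> sbisimilar x x.
Proof.
move=> sx. exists (fun a b => a = b /\ separated a); split=>//.
move=> a b [<- sa]; split=>//.
- move=> y sy h; exists y=>//.
- move=> y sy h; exists y=>//.
Qed.

Lemma sbisimilar_sep n (M : model n) (x y : M) : sbisimilar x y -> separated x /\ separated y.
Proof. case=> R [hR h]. by case: (hR x y h). Qed.

Lemma sat_bisim n (M : model n) (hb : has_borders M) (phi : aiform n) R :
  sbisimulation R -> forall x x' : M, R x x' -> (sat x phi <-> sat x' phi).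
Proof.
move=> hR; elim: phi => [i|a IHa b IHb|a IHa b IHb] x x' hxx' /=.
- by case: (hR x x' hxx') => _ _ hc _ _; rewrite hc.
- by split; case=> h1 h2; split; [exact/(IHa _ _ hxx') | exact/(IHb _ _ hxx')
     | exact/(IHa _ _ hxx') | exact/(IHb _ _ hxx')].
- case: (hR x x' hxx') => _ _ _ hf hbk.
  split.
  + move=> h y hxy hya. apply: NNPP => hyb.
    case: (sat_down hb hyb) => w [hyw [sw hwb]].
    case: (hbk w sw (le_trans hxy hyw)) => v [sv hxv] hvw.
    apply: hwb; apply/(IHb v w hvw).1; apply: h hxv _.
    apply/(IHa _ _ hvw).2; exact: sat_mono hyw hya.
  + move=> h y hxy hya. apply: NNPP => hyb.
    case: (sat_down hb hyb) => w [hyw [sw hwb]].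
    case: (hf w sw (le_trans hxy hyw)) => v [sv hxv] hvw.
    apply: hwb; apply/(IHb w v hvw).2; apply: h hxv _.
    apply/(IHa _ _ hvw).1; exact: sat_mono hyw hya.
Qed.

Fixpoint subseqs T (s : list T) : list (list T) :=
  match s with
  | nil => nil :: nil
  | x :: s' => List.app (List.map (cons x) (subseqs s')) (subseqs s')
  end.

Lemma subseqs_filter T (p : T -> bool) s : List.In (List.filter p s) (subseqs s).
Proof.
elim: s => [|x s IH] /=; first by left.
apply/List.in_app_iff. case: (p x); [left; apply: List.in_map; exact: IH | by right].
Qed.

Definition top n (i0 : 'I_n) : aiform n := AImp (AVar i0) (AVar i0).
Fixpoint conj n (i0 : 'I_n) (l : list (aiform n)) : aiform n :=
  match l with nil => top i0 | g :: l' => AAnd g (conj i0 l') end.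

Lemma sat_top n (M : model n) i0 (x : M) : sat x (top i0).
Proof. by move=> y _ h. Qed.

Lemma sat_conj n (M : model n) i0 (x : M) l :
  sat x (conj i0 l) <-> forall g, List.In g l -> sat x g.
Proof.
elim: l => [|g l IH] /=; first by split=> // _; exact: sat_top.
split.
- case=> hg /IH hl g' [<-|h] //. exact: hl.
- move=> h; split; first by apply: h; left.
  apply/IH => g' hg'; apply: h; by right.
Qed.

Lemma in_In (T : eqType) (x : T) s : x \in s <-> List.In x s.
Proof.
elim: s => [|y s IH] /=; first by rewrite in_nil.
rewrite in_cons; split => [/orP [/eqP -> | /IH h]|[-> | /IH ->]];
  [by left | by right | by rewrite eqxx | by rewrite orbT].
Qed.

Lemma In_enum (T : finType) (x : T) : List.In x (enum T).
Proof. by apply/in_In; rewrite mem_enum. Qed.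

Definition pb (P : Prop) : bool := if excluded_middle_informative P then true else false.
Lemma pbP P : pb P = true <-> P.
Proof. rewrite /pb; case: excluded_middle_informative => h; split=> //. Qed.
Definition cnt n (M : model n) (x : M) := #|[set i | col x i]|.

Lemma cnt_lt_sep n (M : model n) (x : M) : separated x -> cnt x < n.
Proof.
case=> q [hq _]. rewrite /cnt.
have: [set i | col x i] \proper [set: 'I_n].
  apply/properP; split; first exact: subsetT.
  by exists q; rewrite ?inE ?hq.
move/proper_card. by rewrite cardsT card_ord.
Qed.

Lemma cnt_lt n (M : model n) (x y : M) : separated x -> lt x y -> cnt x < cnt y.
Proof.
case=> q [hq hb] hxy. apply: proper_card; apply/properP; split.
- apply/subsetP=> i; rewrite !inE; exact: col_mono (hxy.1).
- by exists q; rewrite !inE ?hq ?(hb y hxy).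
Qed.

Definition Aform n (i0 : 'I_n) (c : {ffun 'I_n -> bool}) (S1 S2 : list (aiform n))
  (r : 'I_n) : aiform n :=
  AAnd (conj i0 (List.map (fun i => if c i then AVar i else AImp (AVar i) (AVar r)) (enum 'I_n)))
   (AAnd (conj i0 (List.map (fun g => AImp g (AVar r)) S1)) (AImp (AVar r) (conj i0 S2))).

Definition chi n (i0 : 'I_n) (c : {ffun 'I_n -> bool}) (S1 S2 : list (aiform n)) : aiform n :=
  conj i0 (List.map (fun r => if c r then top i0 else AImp (Aform i0 c S1 S2 r) (AVar r))
    (enum 'I_n)).

Definition Pg n (M : model n) (g : aiform n) (z : M) :=
  ~ sat z g /\ forall w : M, ~ sat w g -> exists w', le w w' /\ sbisimilar z w'.

Lemma chi_ok n (M : model n) (hb : has_borders M) (i0 : 'I_n) (L : list (aiform n)) (z : M) :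
  separated z ->
  (forall y : M, separated y -> cnt z < cnt y -> exists g, List.In g L /\ Pg g y) ->
  Pg (chi i0 [ffun i => col z i] (List.filter (fun g => pb (~ sat z g)) L)
        (List.filter (fun g => pb (forall y : M, separated y -> lt z y -> sat y g)) L)) z.
Proof.
move=> sz IH.
set c := [ffun i => col z i].
set S1 := List.filter _ L. set S2 := List.filter _ L.
split.
- case: (sz) => q [hq hbq] hchi.
  move/sat_conj: hchi => /(_ (AImp (Aform i0 c S1 S2 q) (AVar q))) h.
  have : sat z (AImp (Aform i0 c S1 S2 q) (AVar q)).
    apply: h. have -> : AImp (Aform i0 c S1 S2 q) (AVar q) =
       (fun r => if c r then top i0 else AImp (Aform i0 c S1 S2 r) (AVar r)) q.
      by rewrite /= /c ffunE hq.
    apply: List.in_map; exact: In_enum.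
  move=> /(_ z (le_refl _)) h2. suff: col z q = true by rewrite hq.
  apply: h2. split; [|split].
  + apply/sat_conj => g /List.in_map_iff [i [<- _]].
    rewrite /c ffunE. case hi: (col z i) => //= v hzv hvi.
    case: (classic (v = z)) => [ev|nv]; first by move: hvi; rewrite ev hi.
    by apply: hbq; split=> // e; apply: nv; rewrite e.
  + apply/sat_conj => g' /List.in_map_iff [g [<- /List.filter_In [_ /pbP hg]]] v hzv hvg.
    case: (classic (v = z)) => [ev|nv]; first by rewrite ev in hvg; case: hg.
    by apply: hbq; split=> // e; apply: nv; rewrite e.
  + move=> v hzv hvq. have nv : z <> v by move=> ev; move: hvq; rewrite -ev hq.
    apply/sat_conj => g /List.filter_In [_ /pbP hg].
    apply: (sat_up hb) => w sw hvw. apply: hg sw _. split; first exact: le_trans hzv hvw.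
    move=> ew; apply: nv; apply: le_antisym hzv _; by rewrite ew.
- move=> w hw.
  have [g [hgin hng]] : exists g, List.In g (List.map (fun r => if c r then top i0
            else AImp (Aform i0 c S1 S2 r) (AVar r)) (enum 'I_n)) /\ ~ sat w g.
    apply: NNPP => hne; apply: hw; apply/sat_conj => g hg; apply: NNPP => hn; apply: hne.
    by exists g.
  case/List.in_map_iff: hgin => r [er _]; subst g.
  case hcr: (c r) hng; first by move=> h; case: h; exact: sat_top.
  move=> hng.
  have [y [hwy [hya hyr]]] : exists y, le w y /\ sat y (Aform i0 c S1 S2 r) /\ ~ col y r.
    apply: NNPP => hne; apply: hng => y hwy hya; apply: NNPP => hyr; apply: hne.
    by exists y.
  have hfr : col y r = false by move: hyr; case: (col y r).
  case: (hb r y hfr) => u [hyu [hur hubr]].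
  have hua : sat u (Aform i0 c S1 S2 r) := sat_mono hyu hya.
  case: hua => h1 [h2 h3].
  have su : separated u by exists r.
  have hcol : forall i, col z i = col u i.
    move=> i. move/sat_conj: h1 => /(_ _ (List.in_map _ _ i (In_enum i))).
    rewrite /c ffunE. case: (col z i) => /=; first by move->.
    move=> h; case hui: (col u i) => //. by rewrite -hur; apply: h (le_refl _) hui.
  have hcnt : cnt z = cnt u.
    rewrite /cnt; apply: eq_card => i; by rewrite !inE hcol.
  exists u; split; first exact: le_trans hwy hyu.
  exists (fun a b => (a = z /\ b = u) \/ sbisimilar a b); split; last by left.
  move=> a b [[-> ->]|hab]; last first.
    case: (sbisimilar_bisim hab) => s1 s2 hc hf hbk; split=> //.
    + move=> y0 sy0 h; case: (hf y0 sy0 h) => y1 k1 k2; exists y1 => //; by right.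
    + move=> y0 sy0 h; case: (hbk y0 sy0 h) => y1 k1 k2; exists y1 => //; by right.
  split=> //.
  + move=> y0 sy0 hzy0. case: (classic (y0 = z)) => [->|ny0].
      exists u; [split=>//; exact: le_refl | by left].
    have lzy : lt z y0 by split=> //; move=> e; apply: ny0.
    have [g [hgL [hg1 hg2]]] := IH y0 sy0 (cnt_lt sz lzy).
    have hzg : ~ sat z g by move=> h; apply: hg1; exact: sat_mono hzy0 h.
    have hgS1 : List.In g S1 by apply/List.filter_In; split=> //; exact/pbP.
    move/sat_conj: h2 => /(_ _ (List.in_map _ _ _ hgS1)) h2.
    have hug : ~ sat u g by move=> h; move: (h2 u (le_refl _) h); rewrite hur.
    case: (hg2 u hug) => w' [huw' hw']. exists w'; last by right.
    split; [exact: (sbisimilar_sep hw').2 | exact: huw'].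
  + move=> y0 sy0 huy0. case: (classic (y0 = u)) => [->|ny0].
      exists z; [split=>//; exact: le_refl | by left].
    have luy : lt u y0 by split=> //; move=> e; apply: ny0.
    have hy0r : col y0 r = true := hubr y0 luy.
    have hS2 := h3 y0 huy0 hy0r.
    have hc : cnt z < cnt y0 by rewrite hcnt; exact: cnt_lt su luy.
    have [g [hgL [hg1 hg2]]] := IH y0 sy0 hc.
    have hnS2 : ~ List.In g S2.
      move=> hin; apply: hg1. by move/sat_conj: hS2; apply.
    have [y1 [sy1 [lzy hny]]] : exists y1, separated y1 /\ lt z y1 /\ ~ sat y1 g.
      apply: NNPP => hne; apply: hnS2; apply/List.filter_In; split=> //; apply/pbP.
      move=> y1 sy1 lzy; apply: NNPP => hny; apply: hne; by exists y1.
    case: (hg2 y1 hny) => y'' [hyy'' hb'']. exists y''; last by right; exact: sbisimilar_sym.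
    split; [exact: (sbisimilar_sep hb'').2 | exact: le_trans lzy.1 hyy''].
Qed.

Lemma claim n (M : model n) (hb : has_borders M) (i0 : 'I_n) m :
  exists L, forall z : M, separated z -> n <= cnt z + m -> exists g, List.In g L /\ Pg g z.
Proof.
elim: m => [|m [L HL]].
  exists nil => z sz; rewrite addn0 => h; have := cnt_lt_sep sz; by rewrite ltnNge h.
exists (List.flat_map (fun c => List.flat_map (fun S1 => List.map (fun S2 => chi i0 c S1 S2)
   (subseqs L)) (subseqs L)) (enum {ffun 'I_n -> bool})).
move=> z sz hz.
exists (chi i0 [ffun i => col z i] (List.filter (fun g => pb (~ sat z g)) L)
        (List.filter (fun g => pb (forall y : M, separated y -> lt z y -> sat y g)) L)).
split; last first.
  apply: (chi_ok hb) sz _ => y sy hlt; apply: HL sy _.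
  apply: leq_trans hz _; rewrite addnS -addSn leq_add2r; exact: hlt.
apply/List.in_flat_map; exists [ffun i => col z i]; split; first exact: In_enum.
apply/List.in_flat_map; exists (List.filter (fun g => pb (~ sat z g)) L); split; first exact: subseqs_filter.
apply: List.in_map; exact: subseqs_filter.
Qed.

Theorem theorem3p19 (n : nat) (hn : 1 <= n) (M : model n)
  (hb : has_borders M) (U : M -> Prop) (hU : upset U) :
  let P1 := exists phi : aiform n, forall x : M, sat x phi <-> U x in
  let P2 := forall x : M,
      (forall z : M, separated z -> le x z ->
         exists y : M, [/\ U y, separated y & sbisimilar z y]) -> U x in
  let P3 :=
      (forall x : M, (forall z : M, separated z -> le x z -> U z) -> U x) /\
      (forall x : M, separated x ->
         (exists x' : M, [/\ U x', separated x' & sbisimilar x x']) -> U x) in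
  (P1 <-> P2) /\ (P1 <-> P3).
Proof.
move=> P1 P2 P3.
have i0 : 'I_n := Ordinal hn.
have h13 : P1 -> P3.
  case=> phi hphi. split.
  - move=> x hx. apply/hphi. apply: (sat_up hb) => w sw hxw. apply/hphi. exact: hx.
  - move=> x sx [x' [hUx' sx' [R [hR hxx']]]]. apply/(hphi x).
    apply/(sat_bisim hb phi hR hxx'). by apply/(hphi x').
have h31 : P3 -> P1.
  case=> Ha Hb.
  have [L HL] := claim hb i0 n.
  exists (conj i0 (List.filter (fun g => pb (forall y, separated y -> U y -> sat y g)) L)) => x.
  split.
  - move=> hx. apply: Ha => z sz hxz. apply: NNPP => hUz.
    have [g [hgL [hgz hgw]]] := HL z sz (leq_addl _ _).
    have hzS := sat_mono hxz hx.
    case: (classic (forall y, separated y -> U y -> sat y g)) => hall.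
    + apply: hgz. move/sat_conj: hzS; apply. apply/List.filter_In; split=> //; exact/pbP.
    + have [y [sy [hUy hny]]] : exists y, separated y /\ U y /\ ~ sat y g.
        apply: NNPP => hne; apply: hall => y sy hUy; apply: NNPP => hny; apply: hne.
        by exists y.
      case: (hgw y hny) => y' [hyy' hzy']. apply: hUz. apply: (Hb z sz).
      exists y'; split => //; [exact: hU hyy' hUy | exact: (sbisimilar_sep hzy').2].
  - move=> hUx. apply/sat_conj => g /List.filter_In [_ /pbP hg].
    apply: (sat_up hb) => w sw hxw. apply: hg sw _. exact: hU hxw hUx.
have h23 : P2 -> P3.
  move=> H2; split.
  - move=> x hx; apply: H2 => z sz hxz. exists z; split=> //; [exact: hx | exact: sbisimilar_refl].
  - move=> x sx [x' [hUx' sx' hxx']]. apply: H2 => z sz hxz.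
    case: (sbisimilar_bisim hxx') => _ _ _ hf _.
    case: (hf z sz hxz) => z' [sz' hxz'] hzz'. exists z'; split => //.
    exact: hU hxz' hUx'.
have h32 : P3 -> P2.
  case=> Ha Hb x hx. apply: Ha => z sz hxz. case: (hx z sz hxz) => y [hUy sy hzy].
  apply: (Hb z sz). by exists y.
tauto.
Qed.
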